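(* For positive integers $\ell'\le \ell$, \[ \frac{1}{\ell}\,\mathbb{E}|\mathscr{L}(\mathbf{X}_\ell)| \le \frac{1}{\ell'}\,\mathbb{E}|\mathscr{L}(\mathbf{X}_{\ell'})|. \]
   Context: Let $X_1,X_2,\dots$ be independent random variables with $X_j$ Poisson distributed with parameter $1/j$, and $\mathbf{X}_k=(X_1,\dots,X_k)$. For a finite list $\mathbf{c}=(c_1,\dots,c_k)$ of non-negative integers, $\mathscr{L}(\mathbf{c}) = \{m_1+2m_2+\cdots+km_k : 0\le m_j\le c_j \text{ for } j=1,\dots,k\}$, and $|\cdot|$ denotes cardinality. *)

(* Defs.v *)
From HB Require Import structures.
From mathcomp Require Import all_boot all_order all_algebra.
From mathcomp Require Import all_classical all_reals all_analysis.
Set Implicit Arguments. Unset Strict Implicit. Unset Printing Implicit Defensive.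
Import Order.TTheory GRing.Theory Num.Theory.
Local Open Scope ring_scope.

(* A list c = (c_1,...,c_k) of non-negative integers is encoded as
   c : {ffun 'I_k -> nat}, with c_j = c (j-1) for j = 1..k
   (i.e. the ordinal i : 'I_k stands for the index j = i+1). *)

Definition Lbound (k : nat) (c : {ffun 'I_k -> nat}) : nat :=
  (\sum_(i < k) i.+1 * c i)%N.

(* Bound for each m_j (m_j <= c_j <= max c). *)
Definition Lmax (k : nat) (c : {ffun 'I_k -> nat}) : nat :=
  (\max_(i < k) c i).+1.

(* scrL(c) = { m_1 + 2 m_2 + ... + k m_k : 0 <= m_j <= c_j }, as a finite set
   of naturals (all its elements are <= Lbound c, so it lives in 'I_(Lbound c).+1). *)
Definition scrL (k : nat) (c : {ffun 'I_k -> nat}) : {set 'I_(Lbound c).+1} :=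
  [set n : 'I_(Lbound c).+1 |
     [exists m : {ffun 'I_k -> 'I_(Lmax c)},
        [forall i, (m i <= c i)%N] && (nat_of_ord n == \sum_(i < k) i.+1 * m i)%N]].

Definition cardL (k : nat) (c : {ffun 'I_k -> nat}) : nat := #|scrL c|.

(* E |scrL(X_k)| where X_1,...,X_k are independent, X_j ~ Poisson(1/j):
   the expectation of a nonnegative function of a discrete random vector
   whose law is the product of the Poisson(1/j) pmfs. *)
Definition ExpCardL (R : realType) (k : nat) : \bar R :=
  \esum_(c in [set: {ffun 'I_k -> nat}])
     ((\prod_(i < k) poisson_pmf (i.+1%:R^-1 : R) (c i)) * (cardL c)%:R)%:E.

(* Main.v *)
Require Import Defs.
From HB Require Import structures.
From mathcomp Require Import all_boot all_order all_algebra.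
From mathcomp Require Import all_classical all_reals all_analysis.
From mathcomp Require Import ring lra.
Import Order.TTheory GRing.Theory Num.Theory.
Set Implicit Arguments. Unset Strict Implicit. Unset Printing Implicit Defensive.
Local Open Scope classical_set_scope.
Local Open Scope ring_scope.

Lemma pois_sum1 (R : realType) (r : R) : 0 < r ->
  (\sum_(x <oo) (poisson_pmf r x)%:E = 1)%E.
Proof.
move=> r0.
have h : poisson_prob r 0%N [set: nat] = 1%E.
  exact: (@probability_setT _ _ _ (poisson_prob r 0%N)).
rewrite /poisson_prob r0 in h; rewrite -h.
rewrite nneseries_esumT; last by move=> n; rewrite lee_fin poisson_pmf_ge0.
by [].
Qed.

Lemma pois_step (R : realType) (r : R) (x : nat) : 0 < r ->
  poisson_pmf r x.+1 * x.+1%:R = r * poisson_pmf r x.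
Proof.
move=> r0; rewrite /poisson_pmf r0 factS natrM exprS.
have h1 : (x`!)%:R != 0 :> R by rewrite pnatr_eq0 -lt0n fact_gt0.
have h2 : (x.+1)%:R != 0 :> R by rewrite pnatr_eq0.
rewrite invfM; field.
by rewrite h1 addrC natr1 h2.
Qed.

Lemma pois_series (R : realType) (r : R) : 0 < r ->
  (\sum_(x <oo) (poisson_pmf r x * x.+1%:R)%:E = (1 + r)%:E)%E.
Proof.
move=> r0.
have ge0 x : 0 <= poisson_pmf r x by apply: poisson_pmf_ge0.
transitivity (\sum_(x <oo) ((poisson_pmf r x)%:E + (poisson_pmf r x * x%:R)%:E))%E.
  by apply: eq_eseriesr => x _; rewrite -EFinD -natr1 mulrDr mulr1 addrC.
rewrite nneseriesD; last 2 first.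
- by move=> i _ _; rewrite lee_fin.
- by move=> i _ _; rewrite lee_fin mulr_ge0.
rewrite pois_sum1 // nneseries_recl //; last by move=> i _; rewrite lee_fin mulr_ge0.
rewrite mulr0 add0e -nneseries_addn; last by move=> i; rewrite lee_fin mulr_ge0.
transitivity (1 + \sum_(i <oo) (r%:E * (poisson_pmf r i)%:E))%E.
  congr (_ + _)%E; apply: eq_eseriesr => i _.
  by rewrite addn1 pois_step // EFinM.
rewrite nneseriesZl; last by move=> i _; rewrite lee_fin.
by rewrite pois_sum1 // mule1 EFinD.
Qed.
Lemma widen_lift k (j : 'I_k) : widen_ord (leqnSn k) j = lift ord_max j.
Proof. by apply: val_inj; rewrite /= /bump leqNgt ltn_ord. Qed.

Definition restr k (c' : {ffun 'I_k.+1 -> nat}) : {ffun 'I_k -> nat} :=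
  [ffun j => c' (lift ord_max j)].

Lemma cardL_rec k (c' : {ffun 'I_k.+1 -> nat}) :
  (cardL c' <= (c' ord_max).+1 * cardL (restr c'))%N.
Proof.
set c := restr c'; set x := c' ord_max.
pose f (p : 'I_(Lbound c).+1 * 'I_x.+1) : 'I_(Lbound c').+1 :=
  inord (p.1 + k.+1 * p.2)%N.
have sub : scrL c' \subset f @: finset.setX (scrL c) [set: 'I_x.+1].
  apply/fintype.subsetP => n; rewrite inE => /existsP[m /andP[/forallP mc /eqP nE]].
  rewrite big_ord_recr /= in nE.
  set a := (\sum_(i < k) _)%N in nE.
  have ma j : (m (lift ord_max j) <= c j)%N by rewrite /c /restr ffunE.
  have aE : a = (\sum_(j < k) j.+1 * m (lift ord_max j))%N.
    by apply: eq_bigr => j _; rewrite widen_lift.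
  have aB : (a < (Lbound c).+1)%N.
    rewrite ltnS aE /Lbound; apply: leq_sum => j _; rewrite leq_mul2l ma orbT //.
  have tB : (m ord_max < x.+1)%N by rewrite ltnS; apply: mc.
  apply/imsetP; exists (Ordinal aB, Ordinal tB).
    rewrite finset.in_setX finset.in_setT andbT inE; apply/existsP.
    exists [ffun j => @inord (\max_(i < k) c i) (m (lift ord_max j))].
    apply/andP; split.
      apply/forallP => j; rewrite ffunE inordK; first exact: ma.
      by rewrite ltnS; apply: leq_trans (ma j) _; apply: leq_bigmax.
    apply/eqP; rewrite /= aE; apply: eq_bigr => j _; rewrite ffunE inordK //.
    by rewrite ltnS; apply: leq_trans (ma j) _; apply: leq_bigmax.
  rewrite /f /=.
  apply: val_inj; rewrite /= inordK; first exact: nE.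
  by move: (ltn_ord n); rewrite {1}nE.
apply: (leq_trans (subset_leq_card sub)); apply: (leq_trans (leq_imset_card _ _)).
by rewrite finset.cardsX finset.cardsT card_ord mulnC.
Qed.

Lemma esum_mulr_le (R : realType) (T : choiceType) (I : set T)
  (a : T -> \bar R) (x : \bar R) : (0 <= x)%E -> (forall i, 0 <= a i)%E ->
  (\esum_(i in I) (x * a i) <= x * \esum_(i in I) a i)%E.
Proof.
move=> x0 a0; apply: ge_ereal_sup => _ [A [finA AI] <-] /=.
rewrite -ge0_mule_fsumr //; apply: lee_wpmul2l => //.
by apply: ereal_sup_ubound; exists A.
Qed.

Definition ext k (p : {ffun 'I_k -> nat} * nat) : {ffun 'I_k.+1 -> nat} :=
  [ffun i => if unlift ord_max i is Some j then p.1 j else p.2].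

Lemma ExpCardL_rec (R : realType) k :
  (ExpCardL R k.+1 <= (1 + (k.+1%:R)^-1 : R)%:E * ExpCardL R k)%E.
Proof.
set r : R := (k.+1%:R)^-1.
have r0 : 0 < r by rewrite invr_gt0 ltr0Sn.
pose g := fun p : {ffun 'I_k.+1 -> nat} =>
  ((\prod_(i < k.+1) poisson_pmf (i.+1%:R^-1 : R) (p i)) * (cardL p)%:R)%:E.
rewrite /ExpCardL -/g (reindex_esum [set: {ffun 'I_k -> nat} * nat] [set: {ffun 'I_k.+1 -> nat}] (@ext k)); last first.
  split.
  - by [].
  - move=> [c x] [d y] _ _ /= h; have hh : ext (c, x) ord_max = ext (d, y) ord_max by rewrite h.
    rewrite /= !ffunE !unlift_none /= in hh; subst y; congr pair.
    apply/ffunP => j; have hj : ext (c, x) (lift ord_max j) = ext (d, x) (lift ord_max j) by rewrite h.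
    by rewrite !ffunE liftK in hj.
  - move=> c' _; exists (restr c', c' ord_max) => //.
    apply/ffunP => i; rewrite ffunE /=; case: unliftP => [j ->|->] //.
    by rewrite ffunE.
have gge0 p : (0 <= g p)%E.
  by rewrite /g lee_fin mulr_ge0 // prodr_ge0 // => i _; apply: poisson_pmf_ge0.
have -> : (\esum_(p in [set: {ffun 'I_k -> nat} * nat]) g (ext p) =
    \esum_(c in [set: {ffun 'I_k -> nat}]) \esum_(x in [set: nat]) g (ext (c, x)))%E.
  rewrite esum_esum; last by move=> *; apply: gge0.
  have -> : [set: {ffun 'I_k -> nat} * nat] = [set: {ffun 'I_k -> nat}] `*`` (fun=> [set: nat]).
    by apply/seteqP; split => -[c x].
  by apply: eq_esum => -[c x].
set F := fun c : {ffun 'I_k -> nat} => ((\prod_(i < k) poisson_pmf (i.+1%:R^-1 : R) (c i)) * (cardL c)%:R).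
have Fge0 c : 0 <= F c.
  by rewrite /F mulr_ge0 // prodr_ge0 // => i _; apply: poisson_pmf_ge0.
apply: (@le_trans _ _ (\esum_(c in [set: {ffun 'I_k -> nat}]) ((1 + r)%:E * (F c)%:E))%E); last first.
  by apply: esum_mulr_le => //; rewrite lee_fin addr_ge0 // ltW.
apply: le_esum => c _.
apply: (@le_trans _ _ (\esum_(x in [set: nat]) ((F c)%:E * (poisson_pmf r x * x.+1%:R)%:E))%E).
  apply: le_esum => x _.
  rewrite /g -EFinM lee_fin big_ord_recr /=.
  have e1 i : ext (c, x) (widen_ord (leqnSn k) i) = c i.
    by rewrite widen_lift ffunE liftK.
  have e2 : ext (c, x) ord_max = x by rewrite ffunE unlift_none.
  under eq_bigr do rewrite e1.
  rewrite e2.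
  have hc : restr (ext (c, x)) = c by apply/ffunP => j; rewrite !ffunE liftK.
  have hL := cardL_rec (ext (c, x)); rewrite hc e2 in hL.
  apply: (@le_trans _ _ ((\prod_(i < k) poisson_pmf (i.+1%:R^-1 : R) (c i) * poisson_pmf r x) * (x.+1 * cardL c)%N%:R)).
    apply: ler_wpM2l; first by rewrite mulr_ge0 ?poisson_pmf_ge0 // prodr_ge0 // => i _; apply: poisson_pmf_ge0.
    by rewrite ler_nat.
  rewrite /F natrM /r.
  set A := \prod_(i < k) _; set p := poisson_pmf _ x; set C := (cardL c)%:R; set X := x.+1%:R.
  rewrite (_ : A * p * (X * C) = A * C * (p * X)) //; ring.
rewrite -(@nneseries_esumT _ (fun x => (F c)%:E * (poisson_pmf r x * x.+1%:R)%:E)%E); last first.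
  by move=> n; rewrite -EFinM lee_fin mulr_ge0 // mulr_ge0 // poisson_pmf_ge0.
cbv beta.
rewrite (@nneseriesZl _ (fun i => (poisson_pmf r i * i.+1%:R)%:E)); last by move=> n _; rewrite lee_fin mulr_ge0 ?poisson_pmf_ge0.
by rewrite pois_series // muleC.
Qed.

Lemma real_ineq (R : realType) n : (0 < n)%N ->
  (n.+1%:R^-1 : R) * (1 + n.+1%:R^-1) <= n%:R^-1.
Proof.
move=> n0; have m0 : (0 : R) < n%:R by rewrite ltr0n.
rewrite -natr1 -subr_ge0.
have -> : (n%:R^-1 - (n%:R + 1)^-1 * (1 + (n%:R + 1)^-1) : R) = (n%:R * (n%:R + 1) ^+ 2)^-1.
  by field; rewrite gt_eqF ?(ltr_wpDr ler01 m0) // gt_eqF.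
by rewrite invr_ge0 mulr_ge0 // ?(ltW m0) // exprn_ge0 // addr_ge0 // ltW.
Qed.

Theorem lemma3p2 (R : realType) (l' l : nat) :
  (0 < l')%N -> (l' <= l)%N ->
  ((l%:R^-1 : R)%:E * ExpCardL R l <= (l'%:R^-1 : R)%:E * ExpCardL R l')%E.
Proof.
move=> l0 /subnKC <-; elim: (l - l')%N => [|d IH]; first by rewrite addn0.
apply: le_trans IH; rewrite addnS.
set n := (l' + d)%N.
have n0 : (0 < n)%N by rewrite /n addn_gt0 l0.
have E0 : (0 <= ExpCardL R n)%E.
  by apply: esum_ge0 => c _; rewrite lee_fin mulr_ge0 // prodr_ge0 // => i _; apply: poisson_pmf_ge0.
apply: (@le_trans _ _ ((n.+1%:R^-1 : R)%:E * ((1 + n.+1%:R^-1 : R)%:E * ExpCardL R n))%E).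
  by apply: lee_wpmul2l; [rewrite lee_fin invr_ge0 ler0n | apply: ExpCardL_rec].
rewrite muleA -EFinM; apply: lee_wpmul2r => //.
by rewrite lee_fin real_ineq.
Qed.
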